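(* Let $\mathfrak{g}$ be a finite-dimensional real Lie algebra, fix a sign $\pm$, and let $\mathbf{M}_{\pm}(q,p) = \mp\operatorname{ad}_q^{*}p$ for $(q,p)\in T^{*}\mathfrak{g}=\mathfrak{g}\times\mathfrak{g}^{*}$. Let $f\colon\mathfrak{g}^{*}\to\mathbb{R}$ be a Casimir of the $(\pm)$-Lie--Poisson bracket $\{f_1,f_2\}_{\pm}(\mu) = \pm\langle\mu,[Df_1(\mu),Df_2(\mu)]\rangle$, define $F := f\circ\mathbf{M}_{\pm}$ and $\gamma\colon T^{*}\mathfrak{g}\to\mathfrak{g}$, $\gamma(q,p) := Df(\mathbf{M}_{\pm}(q,p))$, and consider the $\mathbb{R}$ (Lie algebra) action on $T^{*}\mathfrak{g}$ given by the vector fields $$s_{T^{*}\mathfrak{g}}(q,p) := \big(\pm\operatorname{ad}_{s\gamma(q,p)}q,\ \mp\operatorname{ad}^{*}_{s\gamma(q,p)}p\big),\qquad s\in\mathbb{R}.$$ Then $F$ is the momentum map of this action (i.e. $X_{sF} = s_{T^{*}\mathfrak{g}}$ for all $s$, with $X$ the Hamiltonian vector field for the canonical symplectic structure). Moreover, for any smooth $h\colon\mathfrak{g}^{*}\to\mathbb{R}$, the Hamiltonian $H := h\circ\mathbf{M}_{\pm}$ is infinitesimally invariant under this action, and $F$ is an invariant of the canonical Hamiltonian system $\dot q=\partial H/\partial p$, $\dot p=-\partial H/\partial q$.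
   Context: $\operatorname{ad}_{x}y=[x,y]$, $\operatorname{ad}_{x}^{*}$ is its dual: $\langle \operatorname{ad}_{x}^{*}\alpha, y\rangle = \langle \alpha,[x,y]\rangle$. For smooth $f\colon\mathfrak{g}^{*}\to\mathbb{R}$, $Df(\mu)\in\mathfrak{g}$ is defined by $\langle\delta\mu, Df(\mu)\rangle = \frac{d}{ds}\big|_{s=0}f(\mu+s\delta\mu)$. A Casimir of a Poisson bracket is a function whose bracket with every function vanishes. $T^{*}\mathfrak{g}$ carries the canonical symplectic structure, with Hamiltonian vector field $X_F = (\partial F/\partial p, -\partial F/\partial q)$. *)

(* Defs.v *)
From HB Require Import structures.
From mathcomp Require Import all_boot all_order all_algebra.
From mathcomp Require Import all_classical all_reals all_analysis.
Set Implicit Arguments. Unset Strict Implicit. Unset Printing Implicit Defensive.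
Import Order.TTheory GRing.Theory Num.Theory.
Import numFieldNormedType.Exports.
Local Open Scope ring_scope.

(* Conventions: the n-dimensional real Lie algebra g is modelled (in a basis)
   as 'rV[R]_n with a Lie bracket br; its dual g^* is also 'rV[R]_n, with the
   canonical pairing <a, x> = \sum_i a_i x_i (dual basis). *)

Section LieDefs.
Variables (R : realType) (n : nat).
Notation V := 'rV[R]_n.

Definition ebase (i : 'I_n) : V := delta_mx 0 i.

Definition dpair (a x : V) : R := \sum_(i < n) a 0 i * x 0 i.

Definition lie_bracket (br : V -> V -> V) : Prop :=
  [/\ forall a x y z, br (a *: x + y) z = a *: br x z + br y z,
      forall a x y z, br z (a *: x + y) = a *: br z x + br z y,
      forall x, br x x = 0 &
      forall x y z, br x (br y z) + br y (br z x) + br z (br x y) = 0].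

(* ad_x y = [x, y];  ad^*_x alpha : <ad^*_x alpha, y> = <alpha, [x, y]> *)
Definition ad (br : V -> V -> V) (x y : V) : V := br x y.
Definition coad (br : V -> V -> V) (x a : V) : V :=
  \row_(j < n) dpair a (br x (ebase j)).

(* Df(mu) in g : <dmu, Df(mu)> = d/ds|_{s=0} f(mu + s dmu);
   coordinates are the directional derivatives along the basis *)
Definition Dgrad (f : V -> R) (mu : V) : V :=
  \row_(i < n) ('D_(ebase i) f) mu.

Fixpoint iterD (f : V -> R) (vs : seq V) : V -> R :=
  match vs with
  | [::] => f
  | v :: vs' => 'D_v (iterD f vs')
  end.
Definition smooth (f : V -> R) : Prop :=
  forall (vs : seq V) (x : V), differentiable (iterD f vs) x.

Definition sgn (b : bool) : R := if b then 1 else -1.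

Definition lie_poisson (b : bool) (br : V -> V -> V) (f1 f2 : V -> R) (mu : V) : R :=
  sgn b * dpair mu (br (Dgrad f1 mu) (Dgrad f2 mu)).
Definition casimir (b : bool) (br : V -> V -> V) (f : V -> R) : Prop :=
  forall f2 : V -> R, smooth f2 -> forall mu : V, lie_poisson b br f f2 mu = 0.

Definition Mom (b : bool) (br : V -> V -> V) (q p : V) : V :=
  - sgn b *: coad br q p.

(* functions on T^*g = g x g^* are written curried F q p;
   partial gradients dF/dq in g^*, dF/dp in g *)
Definition dFdq (F : V -> V -> R) (q p : V) : V := Dgrad (fun q' => F q' p) q.
Definition dFdp (F : V -> V -> R) (q p : V) : V := Dgrad (F q) p.

Definition hamvf (F : V -> V -> R) (q p : V) : V * V :=
  (dFdp F q p, - dFdq F q p).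

Definition gam (b : bool) (br : V -> V -> V) (f : V -> R) (q p : V) : V :=
  Dgrad f (Mom b br q p).
Definition actvf (b : bool) (br : V -> V -> V) (f : V -> R) (s : R) (q p : V)
  : V * V :=
  (sgn b *: ad br (s *: gam b br f q p) q,
   - sgn b *: coad br (s *: gam b br f q p) p).

End LieDefs.

(* Main.v *)
Require Import Defs.
From HB Require Import structures.
From mathcomp Require Import all_boot all_order all_algebra.
From mathcomp Require Import all_classical all_reals all_analysis.
From mathcomp Require Import ring lra.
Import Order.TTheory GRing.Theory Num.Theory.
Import numFieldNormedType.Exports.
Local Open Scope ring_scope.
Set Implicit Arguments. Unset Strict Implicit.
Local Notation dpair := Defs.dpair.

Section Alg.
Variables (R : realType) (n : nat).
Notation V := 'rV[R]_n.
Variable br : V -> V -> V.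
Hypothesis Hbr : lie_bracket br.
Implicit Types (a x y z q p X Y : V) (k : R).

Lemma brDl x y z : br (x + y) z = br x z + br y z.
Proof. have := Hbr; rewrite /lie_bracket => -[H _ _ _]; by have := H 1 x y z; rewrite !scale1r. Qed.
Lemma br0l z : br 0 z = 0.
Proof. have := Hbr; rewrite /lie_bracket => -[H _ _ _].
have := H 1 0 0 z; rewrite !scale1r addr0 => /(congr1 (fun v => v - br 0 z)).
by rewrite subrr addrK => <-. Qed.
Lemma brZl k x z : br (k *: x) z = k *: br x z.
Proof. have := Hbr; rewrite /lie_bracket => -[H _ _ _].
by have := H k x 0 z; rewrite addr0 br0l addr0. Qed.
Lemma brDr x y z : br z (x + y) = br z x + br z y.
Proof. have := Hbr; rewrite /lie_bracket => -[_ H _ _]; by have := H 1 x y z; rewrite !scale1r. Qed.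
Lemma br0r z : br z 0 = 0.
Proof. have := Hbr; rewrite /lie_bracket => -[_ H _ _].
have := H 1 0 0 z; rewrite !scale1r addr0 => /(congr1 (fun v => v - br z 0)).
by rewrite subrr addrK => <-. Qed.
Lemma brZr k x z : br z (k *: x) = k *: br z x.
Proof. have := Hbr; rewrite /lie_bracket => -[_ H _ _].
by have := H k x 0 z; rewrite addr0 br0r addr0. Qed.
Lemma brNl x z : br (- x) z = - br x z.
Proof. by rewrite -scaleN1r brZl scaleN1r. Qed.
Lemma brNr x z : br z (- x) = - br z x.
Proof. by rewrite -scaleN1r brZr scaleN1r. Qed.
Lemma brC x y : br x y = - br y x.
Proof. have := Hbr; rewrite /lie_bracket => -[_ _ H _]. have := H (x + y).
rewrite brDl !brDr !H add0r addr0 => /eqP; rewrite addr_eq0 => /eqP //. Qed.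
Lemma jacobi x y z : br x (br y z) + br y (br z x) + br z (br x y) = 0.
Proof. by have := Hbr; rewrite /lie_bracket => -[]. Qed.
Lemma brsuml I (r : seq I) P (F : I -> V) z :
  br (\sum_(i <- r | P i) F i) z = \sum_(i <- r | P i) br (F i) z.
Proof. exact: (big_morph (fun x => br x z) (fun x y => brDl x y z) (br0l z)). Qed.
Lemma brsumr I (r : seq I) P (F : I -> V) z :
  br z (\sum_(i <- r | P i) F i) = \sum_(i <- r | P i) br z (F i).
Proof. exact: (big_morph (fun x => br z x) (fun x y => brDr x y z) (br0r z)). Qed.

Lemma dpairC a x : dpair a x = dpair x a.
Proof. by apply: eq_bigr => i _; rewrite mulrC. Qed.
Lemma dpairDr a x y : dpair a (x + y) = dpair a x + dpair a y.
Proof. by rewrite /dpair -big_split; apply: eq_bigr => i _; rewrite mxE mulrDr. Qed.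
Lemma dpairZr a k x : dpair a (k *: x) = k * dpair a x.
Proof. by rewrite /dpair mulr_sumr; apply: eq_bigr => i _; rewrite mxE mulrCA. Qed.
Lemma dpairDl a x y : dpair (x + y) a = dpair x a + dpair y a.
Proof. by rewrite !(dpairC _ a) dpairDr. Qed.
Lemma dpairZl a k x : dpair (k *: x) a = k * dpair x a.
Proof. by rewrite !(dpairC _ a) dpairZr. Qed.
Lemma dpairNr a x : dpair a (- x) = - dpair a x.
Proof. by rewrite -scaleN1r dpairZr mulN1r. Qed.
Lemma dpairNl a x : dpair (- x) a = - dpair x a.
Proof. by rewrite -scaleN1r dpairZl mulN1r. Qed.
Lemma dpair_e a i : dpair a (ebase R i) = a 0 i.
Proof. rewrite /dpair (bigD1 i) //= big1 => [|j /negbTE ji]; rewrite /ebase mxE.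
  by rewrite !eqxx mulr1 addr0.
by rewrite ji andbF mulr0. Qed.

Lemma rexp (x : V) : x = \sum_(i < n) x 0 i *: ebase R i.
Proof. exact: row_sum_delta. Qed.

Lemma coadP x a y : dpair (coad br x a) y = dpair a (br x y).
Proof.
rewrite {2}(rexp y) brsumr /dpair.
under [in RHS]eq_bigr do rewrite summxE.
rewrite /coad.
under eq_bigr do rewrite mulr_sumr.
under [LHS]eq_bigr do rewrite mxE /dpair mulr_suml.
rewrite [RHS]exchange_big /=; apply: eq_bigr => i _; apply: eq_bigr => j _.
rewrite brZr mxE; ring.
Qed.

Lemma coadDl x y a : coad br (x + y) a = coad br x a + coad br y a.
Proof. by apply/rowP => j; rewrite !mxE brDl dpairDr. Qed.
Lemma coadZl k x a : coad br (k *: x) a = k *: coad br x a.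
Proof. by apply/rowP => j; rewrite !mxE brZl dpairZr. Qed.
Lemma coadDr x y a : coad br a (x + y) = coad br a x + coad br a y.
Proof. by apply/rowP => j; rewrite !mxE dpairDl. Qed.
Lemma coadZr k x a : coad br a (k *: x) = k *: coad br a x.
Proof. by apply/rowP => j; rewrite !mxE dpairZl. Qed.

Lemma sgn2 b : sgn R b * sgn R b = 1.
Proof. by case: b; rewrite /sgn ?mulr1 ?mulrNN ?mulr1. Qed.

Lemma MomDl b x y a : Mom b br (x + y) a = Mom b br x a + Mom b br y a.
Proof. by rewrite /Mom coadDl scalerDr. Qed.
Lemma MomZl b k x a : Mom b br (k *: x) a = k *: Mom b br x a.
Proof. by rewrite /Mom coadZl !scalerA mulrC. Qed.
Lemma MomDr b x y a : Mom b br a (x + y) = Mom b br a x + Mom b br a y.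
Proof. by rewrite /Mom coadDr scalerDr. Qed.
Lemma MomZr b k x a : Mom b br a (k *: x) = k *: Mom b br a x.
Proof. by rewrite /Mom coadZr !scalerA mulrC. Qed.

Lemma keyK b q p X Y :
  dpair (Mom b br (sgn R b *: br Y q) p + Mom b br q (- sgn R b *: coad br Y p)) X
  = sgn R b * dpair (Mom b br q p) (br X Y).
Proof.
have E : br (br Y q) X = br Y (br q X) + br q (br X Y).
  rewrite (brC (br Y q) X).
  by move/eqP: (jacobi Y q X); rewrite addrC addr_eq0 => /eqP ->; rewrite opprK.
rewrite dpairDl /Mom !dpairZl !coadP.
rewrite brZl dpairZr dpairZl coadP E dpairDr.
ring.
Qed.

Lemma Mom0l b y : Mom b br 0 y = 0.
Proof. by have := MomZl b 0 0 y; rewrite !scale0r. Qed.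
Lemma Mom0r b y : Mom b br y 0 = 0.
Proof. by have := MomZr b 0 0 y; rewrite !scale0r. Qed.

Lemma Mom_exp b x y j : (Mom b br x y) 0 j =
  \sum_(k < n) \sum_(i < n) x 0 k * y 0 i * (Mom b br (ebase R k) (ebase R i)) 0 j.
Proof.
rewrite {1}(rexp x) (big_morph (fun x => Mom b br x y) (fun x1 x2 => MomDl b x1 x2 y) (Mom0l b y)).
rewrite summxE; apply: eq_bigr => k _.
rewrite MomZl {1}(rexp y) (big_morph (fun y => Mom b br (ebase R k) y) (fun x1 x2 => MomDr b x1 x2 _) (Mom0r b _)).
rewrite mxE summxE mulr_sumr; apply: eq_bigr => i _.
by rewrite MomZr !mxE; ring.
Qed.
End Alg.

Section Ana.
Variables (R : realType) (n : nat).
Notation V := 'rV[R]_n.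

Lemma Ldiff (g : V -> R) x v : differentiable g x -> 'D_v g x = dpair v (Dgrad g x).
Proof.
move=> dg; rewrite deriveE // {1}(rexp v) linear_sum /dpair.
apply: eq_bigr => i _; rewrite linearZ /= -deriveE // mxE.
by [].
Qed.


Lemma coord_der (a : R -> V) (t : R) (da : V) (k : 'I_n) :
  is_derive t 1 a da -> is_derive t 1 (fun s => a s 0 k) (da 0 k).
Proof.
move=> ha; have ea : derivable a t 1 := @ex_derive _ _ _ _ _ _ _ ha.
have := (derivable_mxP a t 1).1 ea 0 k => ek.
apply: DeriveDef => //.
by rewrite -(@derive_val _ _ _ _ _ _ _ ha) derive_mx // mxE.
Qed.

Lemma bil_der (K : 'I_n -> 'I_n -> R) (a c : R -> V) (t : R) (da dc : V) :
  is_derive t 1 a da -> is_derive t 1 c dc ->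
  is_derive t 1 (fun s => \sum_(k < n) \sum_(i < n) a s 0 k * c s 0 i * K k i)
    (\sum_(k < n) \sum_(i < n) (da 0 k * c t 0 i + a t 0 k * dc 0 i) * K k i).
Proof.
move=> ha hc.
rewrite -fct_sumE; apply: is_derive_sum => k.
rewrite -fct_sumE; apply: is_derive_sum => i.
have h1 := coord_der k ha; have h2 := coord_der i hc.
have h3 : is_derive t 1 ((fun s => a s 0 k) * (fun s => c s 0 i)) _ := is_deriveM h1 h2.
have h4 := is_deriveM h3 (is_derive_cst (K k i) t 1).
have -> : (fun s => a s 0 k * c s 0 i * K k i) = ((fun s => a s 0 k) * (fun s => c s 0 i)) * cst (K k i).
  by apply/funext => s.
apply: (is_derive_eq h4).
rewrite /= scaler0 add0r /GRing.scale /=; ring.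
Qed.

Lemma chain (g : V -> R) (c : R -> V) (t : R) (dc : V) :
  differentiable g (c t) -> is_derive t 1 c dc ->
  is_derive t 1 (fun s => g (c s)) (dpair dc (Dgrad g (c t))).
Proof.
move=> dg hc.
have dc' : differentiable c t.
  by apply/derivable1_diffP; exact: (@ex_derive _ _ _ _ _ _ _ hc).
have dgc : differentiable (g \o c) t by exact: differentiable_comp.
apply: DeriveDef.
  by apply/derivable1_diffP.
rewrite (@deriveE _ _ _ (g \o c)) // diff_comp //= -deriveE //.
by rewrite -(@deriveE _ _ _ c t 1 dc') (@derive_val _ _ _ _ _ _ _ hc) Ldiff.
Qed.

Lemma aff_der (w u : V) (t0 : R) : is_derive t0 1 (fun t : R => t *: w + u) w.
Proof.
have hd : differentiable ( *:%R ^~ w : R -> V) t0 := @ex_diff _ _ _ _ _ _ _ (is_diff_scalel t0 w).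
have hs : is_derive t0 1 ( *:%R ^~ w : R -> V) w.
  apply: DeriveDef; first exact: diff_derivable.
  by rewrite deriveE // (@diff_val _ _ _ _ _ _ _ (is_diff_scalel t0 w)) /= scale1r.
have := is_deriveD hs (is_derive_cst u t0 1).
rewrite addr0 => h.
by apply: (is_derive_eq h).
Qed.

Lemma aff_der' (w u : V) (t0 : R) : is_derive t0 1 (fun t : R => u + t *: w) w.
Proof.
have -> : (fun t : R => u + t *: w) = (fun t : R => t *: w + u) by apply/funext => t; rewrite addrC.
exact: aff_der.
Qed.

Lemma dirD (g : V -> R) x v : 'D_v g x = 'D_1 (fun t : R => g (t *: v + x)) 0.
Proof.
rewrite /derive.
suff -> : (fun h : R => h^-1 *: ((g \o shift x) (h *: v) - g x)) =
  (fun h : R => h^-1 *: (((fun t : R => g (t *: v + x)) \o shift 0) (h *: 1) - (fun t : R => g (t *: v + x)) 0)) by [].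
apply/funext => h /=.
by rewrite scale0r add0r addr0 [h *: 1]mulr1.
Qed.


Variable br : V -> V -> V.
Hypothesis Hbr : lie_bracket br.

Lemma Mom_der b (qc pc : R -> V) (t : R) (dq dp : V) :
  is_derive t 1 qc dq -> is_derive t 1 pc dp ->
  is_derive t 1 (fun s => Mom b br (qc s) (pc s)) (Mom b br dq (pc t) + Mom b br (qc t) dp).
Proof.
move=> hq hp.
pose K j k i := (Mom b br (ebase R k) (ebase R i)) 0 j.
have hj : forall j, is_derive t 1 (fun s => Mom b br (qc s) (pc s) 0 j)
   (\sum_(k < n) \sum_(i < n) (dq 0 k * pc t 0 i + qc t 0 k * dp 0 i) * K j k i).
  move=> j.
  have -> : (fun s => Mom b br (qc s) (pc s) 0 j) =
     (fun s => \sum_(k < n) \sum_(i < n) qc s 0 k * pc s 0 i * K j k i).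
    by apply/funext => s; rewrite (Mom_exp Hbr).
  exact: bil_der.
have ed : derivable (fun s => Mom b br (qc s) (pc s)) t 1.
  apply/derivable_mxP => i j; rewrite (ord1 i).
  exact: (@ex_derive _ _ _ _ _ _ _ (hj j)).
apply: DeriveDef => //.
rewrite derive_mx //; apply/matrixP => i0 j; rewrite (ord1 i0) mxE.
rewrite (@derive_val _ _ _ _ _ _ _ (hj j)).
have -> : (Mom b br dq (pc t) + Mom b br (qc t) dp) 0 j =
   Mom b br dq (pc t) 0 j + Mom b br (qc t) dp 0 j by rewrite mxE.
rewrite !(Mom_exp Hbr) -big_split /=; apply: eq_bigr => k _.
rewrite -big_split; apply: eq_bigr => i _ /=.
rewrite /K; ring.
Qed.

Lemma G1a b (g : V -> R) (dg : forall x, differentiable g x) q p :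
  Dgrad (fun p' => g (Mom b br q p')) p = sgn R b *: br (Dgrad g (Mom b br q p)) q.
Proof.
apply/rowP => i; rewrite [RHS]mxE [LHS]mxE dirD.
have h := chain (dg _) (Mom_der b (is_derive_cst q (0:R) (1:R)) (aff_der (ebase R i) p 0)).
apply: (etrans (@derive_val _ _ _ _ _ _ _ h)).
rewrite /= scale0r add0r (Mom0l Hbr) add0r /Mom dpairZl (coadP Hbr) dpairC dpair_e.
by rewrite (brC Hbr q) mxE mulrN mulNr opprK.
Qed.

Lemma G1b b (g : V -> R) (dg : forall x, differentiable g x) q p :
  Dgrad (fun q' => g (Mom b br q' p)) q = sgn R b *: coad br (Dgrad g (Mom b br q p)) p.
Proof.
apply/rowP => i; rewrite [RHS]mxE [LHS]mxE dirD.
have h := chain (dg _) (Mom_der b (aff_der (ebase R i) q 0) (is_derive_cst p (0:R) (1:R))).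
apply: (etrans (@derive_val _ _ _ _ _ _ _ h)).
rewrite /= scale0r add0r Mom0r addr0 /Mom dpairZl (coadP Hbr).
rewrite /coad mxE (brC Hbr (ebase R i)) dpairNr.
by rewrite mulrN mulNr opprK.
Qed.

End Ana.



Theorem proposition4p4 (R : realType) (n : nat)
  (br : 'rV[R]_n -> 'rV[R]_n -> 'rV[R]_n) (b : bool) (f : 'rV[R]_n -> R) :
  lie_bracket br -> smooth f -> casimir b br f ->
  let F := fun q p => f (Mom b br q p) in
  (* F is the momentum map: X_{sF} = s_{T^*g} for every s *)
  (forall (s : R) (q p : 'rV[R]_n),
      hamvf (fun q' p' => s * F q' p') q p = actvf b br f s q p) /\
  (forall h : 'rV[R]_n -> R, smooth h ->
     let H := fun q p => h (Mom b br q p) in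
     (* H is infinitesimally invariant under the action *)
     (forall (s : R) (q p : 'rV[R]_n),
        'D_1 (fun t : R => H (q + t *: (actvf b br f s q p).1)
                             (p + t *: (actvf b br f s q p).2)) 0 = 0) /\
     (* F is constant along every solution of qdot = dH/dp, pdot = -dH/dq *)
     (forall (a c : R) (qc pc : R -> 'rV[R]_n),
        (forall t, a < t < c ->
           is_derive t 1 qc (hamvf H (qc t) (pc t)).1 /\
           is_derive t 1 pc (hamvf H (qc t) (pc t)).2) ->
        forall t1 t2, a < t1 < c -> a < t2 < c ->
          F (qc t1) (pc t1) = F (qc t2) (pc t2))).
Proof.
move=> Hbr sf cf F.
have df : forall x, differentiable f x := fun x => sf [::] x.
split.
  move=> s q p.
  have Es : (fun mu => s * f mu) = s *: f by apply/funext.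
  have dsf : forall x, differentiable (fun mu => s * f mu) x.
    by move=> x; rewrite Es; apply: differentiableZ.
  have Ds : forall x, Dgrad (fun mu => s * f mu) x = s *: Dgrad f x.
    move=> x; apply/rowP => i; rewrite /Dgrad !mxE.
    have -> : (fun mu => s * f mu) = s \*: f by apply/funext.
    by rewrite deriveZ //; apply: diff_derivable.
  rewrite /hamvf /actvf /dFdp /dFdq /F /gam /ad.
  congr pair.
    by apply: (etrans (G1a Hbr b dsf q p)); rewrite Ds.
  have := G1b Hbr b dsf q p; rewrite /= => ->.
  by rewrite Ds scaleNr.
move=> h sh H.
have dh : forall x, differentiable h x := fun x => sh [::] x.
split.
  move=> s q p; rewrite /H /actvf /ad /gam /=.
  set Y := s *: Dgrad f (Mom b br q p).
  have hd := chain (dh _) (Mom_der Hbr b (aff_der' (sgn R b *: br Y q) q 0)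
                                       (aff_der' (- sgn R b *: coad br Y p) p 0)).
  apply: (etrans (@derive_val _ _ _ _ _ _ _ hd)).
  rewrite /= !scale0r !addr0 (keyK Hbr) /Y (brZr Hbr) dpairZr.
  have := cf h sh (Mom b br q p); rewrite /lie_poisson => E.
  rewrite (brC Hbr (Dgrad h _)) dpairNr.
  move: E; set D := Defs.dpair _ _ => E.
  by transitivity (- s * (sgn R b * D)); [ring | rewrite E; ring].
move=> a c qc pc hder.
have key : forall t, a < t < c -> is_derive t 1 (fun s => F (qc s) (pc s)) 0.
  move=> t ht; have [h1 h2] := hder t ht.
  rewrite /hamvf /dFdp /dFdq /H /= in h1 h2.
  rewrite (G1a Hbr b dh) in h1; rewrite (G1b Hbr b dh) -scaleNr in h2.
  have hc := chain (df _) (Mom_der Hbr b h1 h2).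
  apply: (is_derive_eq hc).
  rewrite (keyK Hbr).
  by have := cf h sh (Mom b br (qc t) (pc t)); rewrite /lie_poisson.
have main : forall t1 t2, a < t1 < c -> a < t2 < c -> t1 <= t2 ->
    F (qc t1) (pc t1) = F (qc t2) (pc t2).
  move=> t1 t2 ht1 ht2 le12.
  have cont : ({within `[t1, t2], continuous (fun s => F (qc s) (pc s))})%classic.
    apply: continuous_in_subspaceT => z /[1!inE] zA.
    have hz : a < z < c.
      move: zA; rewrite /mkset /= in_itv /= => /andP[z1 z2].
      move: ht1 ht2 => /andP[? ?] /andP[? ?]; apply/andP; split; lra.
    apply/differentiable_continuous/derivable1_diffP.
    exact: (@ex_derive _ _ _ _ _ _ _ (key z hz)).
  have inI : forall x, x \in `]t1, t2[ -> a < x < c.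
    move=> x; rewrite in_itv /= => /andP[z1 z2].
    move: ht1 ht2 => /andP[? ?] /andP[? ?]; apply/andP; split; lra.
  have [z _ E] := @MVT_segment R (fun s => F (qc s) (pc s)) (fun _ => 0) t1 t2 le12
    (fun x xin => key x (inI x xin)) cont.
  by move/eqP: E; rewrite mul0r subr_eq0 => /eqP.
move=> t1 t2 ht1 ht2.
have [le12|le21] := leP t1 t2; first exact: main.
by apply/esym/main => //; apply: ltW.
Qed.
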